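(* Let $L$ be an IL-algebra with greatest element $\top$, and let $F$ be an affine filter of $L$. Then $L/F$, with operations $[x]\cup[y]=[x\cup y]$, $[x]\cap[y]=[x\cap y]$, $[x]\ast[y]=[x\ast y]$, $[x]\to[y]=[x\to y]$, least element $[\bot]$ and unit $[1]$, is a residuated lattice.
   Context: An IL-algebra is a structure $(L,\cup,\cap,\bot,\to,\ast,1)$ such that $(L,\cup,\cap,\bot)$ is a lattice with least element $\bot$, $(L,\ast,1)$ is a commutative monoid with unit $1$, and for all $x,y,z\in L$: $x\ast y\leq z$ iff $x\leq y\to z$; it has a greatest element $\top=\bot\to\bot$. A filter of $L$ is a non-empty $F\subseteq L$ with $1\in F$, such that $x,y\in F$ implies $x\ast y\in F$ and $x\cap y\in F$, and $x\in F$, $x\leq y$ implies $y\in F$. A filter $F$ is affine if $\top\to1\in F$. For a filter $F$, $x\,\rho_F\,y$ iff $x\to y\in F$ and $y\to x\in F$; $[x]$ is the $\rho_F$-class of $x$ and $L/F=\{[x]:x\in L\}$. A residuated lattice is a structure $(L,\cup,\cap,0,\to,\ast,1)$ such that $(L,\cup,\cap,0,1)$ is a bounded lattice with least element $0$ and greatest element $1$, $(L,\ast,1)$ is a commutative monoid, and $x\ast y\leq z$ iff $x\leq y\to z$ for all $x,y,z$. *)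

(* Defs.v *)
Set Implicit Arguments.

Section Sig.
Variable A : Type.
Variables (join meet : A -> A -> A) (bot : A) (imp mul : A -> A -> A) (one : A).

Definition lat_le (x y : A) : Prop := meet x y = x.

Definition is_lattice : Prop :=
  (forall x y, join x y = join y x) /\
  (forall x y, meet x y = meet y x) /\
  (forall x y z, join x (join y z) = join (join x y) z) /\
  (forall x y z, meet x (meet y z) = meet (meet x y) z) /\
  (forall x y, join x (meet x y) = x) /\
  (forall x y, meet x (join x y) = x).

Definition is_comm_monoid : Prop :=
  (forall x y z, mul x (mul y z) = mul (mul x y) z) /\
  (forall x y, mul x y = mul y x) /\
  (forall x, mul one x = x).

Definition residuation : Prop :=
  forall x y z, lat_le (mul x y) z <-> lat_le x (imp y z).

Definition is_IL_algebra : Prop :=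
  is_lattice /\ (forall x, lat_le bot x) /\ is_comm_monoid /\ residuation.

Definition is_residuated_lattice : Prop :=
  is_lattice /\ (forall x, lat_le bot x) /\ (forall x, lat_le x one) /\
  is_comm_monoid /\ residuation.
End Sig.

Record ILAlgebra := {
  carrier :> Type;
  il_join : carrier -> carrier -> carrier;
  il_meet : carrier -> carrier -> carrier;
  il_bot : carrier;
  il_imp : carrier -> carrier -> carrier;
  il_mul : carrier -> carrier -> carrier;
  il_one : carrier;
  il_laws : is_IL_algebra il_join il_meet il_bot il_imp il_mul il_one
}.

Section ILDefs.
Variable L : ILAlgebra.

Definition il_le (x y : L) : Prop := lat_le (il_meet L) x y.
Definition il_top : L := il_imp L (il_bot L) (il_bot L).

Definition is_filter (F : L -> Prop) : Prop :=
  (exists x, F x) /\ F (il_one L) /\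
  (forall x y, F x -> F y -> F (il_mul L x y) /\ F (il_meet L x y)) /\
  (forall x y, F x -> il_le x y -> F y).

Definition affine (F : L -> Prop) : Prop := F (il_imp L il_top (il_one L)).

Definition rho (F : L -> Prop) (x y : L) : Prop :=
  F (il_imp L x y) /\ F (il_imp L y x).

Definition rclass (F : L -> Prop) (x : L) : L -> Prop := fun y => rho F x y.

Definition quot (F : L -> Prop) : Type :=
  { S : L -> Prop | exists x, S = rclass F x }.

Definition qcls (F : L -> Prop) (x : L) : quot F :=
  exist _ (rclass F x) (ex_intro _ x eq_refl).
End ILDefs.

Arguments is_filter {L} F.
Arguments affine {L} F.
Arguments rho {L} F x y.
Arguments rclass {L} F x.
Arguments quot {L} F.
Arguments qcls {L} F x.

(* Main.v *)
Require Import Defs.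
From Stdlib Require Import ProofIrrelevance FunctionalExtensionality PropExtensionality IndefiniteDescription.

Set Implicit Arguments.
Section Q.
Variable L : ILAlgebra.
Local Notation jn := (il_join L).
Local Notation mt := (il_meet L).
Local Notation bt := (il_bot L).
Local Notation im := (il_imp L).
Local Notation ml := (il_mul L).
Local Notation one := (il_one L).
Local Notation le := (@il_le L).

Lemma jC x y : jn x y = jn y x. Proof. destruct (il_laws L) as [[h _] _]. apply h. Qed.
Lemma mC x y : mt x y = mt y x. Proof. destruct (il_laws L) as [[_ [h _]] _]. apply h. Qed.
Lemma jA x y z : jn x (jn y z) = jn (jn x y) z. Proof. destruct (il_laws L) as [[_ [_ [h _]]] _]. apply h. Qed.
Lemma mA x y z : mt x (mt y z) = mt (mt x y) z. Proof. destruct (il_laws L) as [[_ [_ [_ [h _]]]] _]. apply h. Qed.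
Lemma jabs x y : jn x (mt x y) = x. Proof. destruct (il_laws L) as [[_ [_ [_ [_ [h _]]]]] _]. apply h. Qed.
Lemma mabs x y : mt x (jn x y) = x. Proof. destruct (il_laws L) as [[_ [_ [_ [_ [_ h]]]]] _]. apply h. Qed.
Lemma botl x : mt bt x = bt. Proof. destruct (il_laws L) as [_ [h _]]. apply h. Qed.
Lemma pA x y z : ml x (ml y z) = ml (ml x y) z. Proof. destruct (il_laws L) as [_ [_ [[h _] _]]]. apply h. Qed.
Lemma pC x y : ml x y = ml y x. Proof. destruct (il_laws L) as [_ [_ [[_ [h _]] _]]]. apply h. Qed.
Lemma p1 x : ml one x = x. Proof. destruct (il_laws L) as [_ [_ [[_ [_ h]] _]]]. apply h. Qed.
Lemma res x y z : le (ml x y) z <-> le x (im y z). Proof. destruct (il_laws L) as [_ [_ [_ h]]]. apply h. Qed.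
Lemma resL x y z : le (ml x y) z -> le x (im y z). Proof. apply res. Qed.
Lemma resR x y z : le x (im y z) -> le (ml x y) z. Proof. apply res. Qed.

Lemma mm x : mt x x = x.
Proof. transitivity (mt x (jn x (mt x x))). rewrite jabs; reflexivity. apply mabs. Qed.
Lemma le_refl x : le x x. Proof. apply mm. Qed.
Lemma le_trans x y z : le x y -> le y z -> le x z.
Proof. unfold il_le, lat_le. intros H1 H2. rewrite <- H1. rewrite <- mA. rewrite H2. reflexivity. Qed.
Lemma le_anti x y : le x y -> le y x -> x = y.
Proof. unfold il_le, lat_le. intros H1 H2. rewrite <- H1. rewrite mC. exact H2. Qed.
Lemma meet_l x y : le (mt x y) x.
Proof. unfold il_le, lat_le. rewrite mC, mA, mm. reflexivity. Qed.
Lemma meet_r x y : le (mt x y) y.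
Proof. unfold il_le, lat_le. rewrite <- mA, mm. reflexivity. Qed.
Lemma glb x y z : le z x -> le z y -> le z (mt x y).
Proof. unfold il_le, lat_le. intros H1 H2. rewrite mA, H1, H2. reflexivity. Qed.
Lemma join_l x y : le x (jn x y). Proof. apply mabs. Qed.
Lemma join_r x y : le y (jn x y). Proof. unfold il_le, lat_le. rewrite jC. apply mabs. Qed.
Lemma le_join x y : le x y -> jn x y = y.
Proof. unfold il_le, lat_le. intro H. rewrite <- H. rewrite jC, mC. apply jabs. Qed.
Lemma join_le x y : jn x y = y -> le x y.
Proof. unfold il_le, lat_le. intro H. rewrite <- H. apply mabs. Qed.
Lemma lub x y z : le x z -> le y z -> le (jn x y) z.
Proof. intros H1 H2. apply join_le. rewrite <- jA, (le_join H2), (le_join H1). reflexivity. Qed.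

Lemma mul_mono_l x y z : le x y -> le (ml x z) (ml y z).
Proof. intro H. apply resR. apply (le_trans H). apply resL. apply le_refl. Qed.
Lemma mul_mono_r x y z : le x y -> le (ml z x) (ml z y).
Proof. intro H. rewrite (pC z x), (pC z y). apply mul_mono_l, H. Qed.
Lemma ev y z : le (ml (im y z) y) z. Proof. apply resR, le_refl. Qed.
Lemma one_imp x : le one (im x x). Proof. apply resL. rewrite p1. apply le_refl. Qed.
Lemma imp_mono_r x y y' : le y y' -> le (im x y) (im x y').
Proof. intro H. apply resL. exact (le_trans (ev x y) H). Qed.
Lemma imp_trans x y z : le (ml (im x y) (im y z)) (im x z).
Proof. apply resL. rewrite (pC (im x y)), <- pA. eapply le_trans. apply mul_mono_r, ev. apply ev. Qed.
Lemma curry x y z : im (ml x y) z = im x (im y z).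
Proof. apply le_anti.
- apply resL, resL. rewrite <- pA. apply ev.
- apply resL. rewrite pA. apply resR. apply ev. Qed.
Lemma top_ge x : le x (il_top L).
Proof. unfold il_top. apply resL. rewrite pC. apply resR. apply botl. Qed.
Lemma imp_anti_l x x' z : le x x' -> le (im x' z) (im x z).
Proof. intro H. apply resL. eapply le_trans. apply mul_mono_r, H. apply ev. Qed.

Variable F : L -> Prop.
Hypothesis HF : is_filter F.
Hypothesis HA : affine F.

Lemma F1 : F one. Proof. destruct HF as [_ [h _]]. exact h. Qed.
Lemma Fmul x y : F x -> F y -> F (ml x y). Proof. destruct HF as [_ [_ [h _]]]. intros; apply h; auto. Qed.
Lemma Fmeet x y : F x -> F y -> F (mt x y). Proof. destruct HF as [_ [_ [h _]]]. intros; apply h; auto. Qed.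
Lemma Fup x y : F x -> le x y -> F y. Proof. destruct HF as [_ [_ [_ h]]]. apply h. Qed.

Lemma Frefl x : F (im x x). Proof. exact (Fup F1 (one_imp x)). Qed.
Lemma Ftrans x y z : F (im x y) -> F (im y z) -> F (im x z).
Proof. intros. apply (Fup (Fmul H H0)). apply imp_trans. Qed.

Lemma rho_refl x : rho F x x. Proof. split; apply Frefl. Qed.
Lemma rho_sym x y : rho F x y -> rho F y x. Proof. intros [a b]; split; auto. Qed.
Lemma rho_trans x y z : rho F x y -> rho F y z -> rho F x z.
Proof. intros [a b] [c d]; split; eapply Ftrans; eauto. Qed.

Lemma Fmulc x x' y y' : F (im x x') -> F (im y y') -> F (im (ml x y) (ml x' y')).
Proof. intros H1 H2. apply Ftrans with (ml x' y).
- apply (Fup H1). apply resL. rewrite pA. apply mul_mono_l, ev.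
- apply (Fup H2). apply resL. rewrite (pC x' y), (pC x' y'), pA. apply mul_mono_l, ev. Qed.
Lemma Fmeetc x x' y y' : F (im x x') -> F (im y y') -> F (im (mt x y) (mt x' y')).
Proof. intros H1 H2. apply (Fup (Fmeet H1 H2)). apply resL. apply glb.
- eapply le_trans. apply mul_mono_l, meet_l. eapply le_trans. apply mul_mono_r, meet_l. apply ev.
- eapply le_trans. apply mul_mono_l, meet_r. eapply le_trans. apply mul_mono_r, meet_r. apply ev. Qed.
Lemma Fjoinc x x' y y' : F (im x x') -> F (im y y') -> F (im (jn x y) (jn x' y')).
Proof. intros H1 H2. apply (Fup (Fmeet H1 H2)). apply resL. rewrite pC. apply resR. apply lub; apply resL; rewrite pC.
- eapply le_trans. apply mul_mono_l, meet_l. eapply le_trans. apply ev. apply join_l.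
- eapply le_trans. apply mul_mono_l, meet_r. eapply le_trans. apply ev. apply join_r. Qed.
Lemma Fimpc x x' y y' : F (im x' x) -> F (im y y') -> F (im (im x y) (im x' y')).
Proof. intros H1 H2. apply Ftrans with (im x' y).
- apply (Fup H1). apply resL. apply imp_trans.
- apply (Fup H2). apply resL. rewrite pC. apply imp_trans. Qed.

Lemma le_char a b : rho F (mt a b) a <-> F (im a b).
Proof. split.
- intros [_ h]. apply (Fup h). apply imp_mono_r, meet_r.
- intro h. split.
  + apply (Fup F1). apply resL. rewrite p1. apply meet_l.
  + apply (Fup (Fmeet (Frefl a) h)). apply resL. apply glb.
    * eapply le_trans. apply mul_mono_l, meet_l. apply ev.
    * eapply le_trans. apply mul_mono_l, meet_r. apply ev. Qed.

Lemma sig_eq (S T : quot F) : proj1_sig S = proj1_sig T -> S = T.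
Proof. destruct S, T; simpl; intro; subst. f_equal. apply proof_irrelevance. Qed.

Lemma qcls_eq x y : rho F x y -> qcls F x = qcls F y.
Proof. intro H. apply sig_eq. simpl. unfold rclass. apply functional_extensionality.
intro z. apply propositional_extensionality. split; intro.
- eapply rho_trans. apply rho_sym, H. auto.
- eapply rho_trans; eauto. Qed.

Lemma qcls_inv x y : qcls F x = qcls F y -> rho F x y.
Proof. intro H. apply (f_equal (@proj1_sig _ _)) in H. simpl in H.
pose proof (equal_f H y) as E. unfold rclass in E. rewrite E. apply rho_refl. Qed.

Definition rep (S : quot F) : L := proj1_sig (constructive_indefinite_description _ (proj2_sig S)).
Lemma rep_spec S : S = qcls F (rep S).
Proof. apply sig_eq. simpl. unfold rep.
destruct (constructive_indefinite_description _ (proj2_sig S)) as [x Hx]. simpl. exact Hx. Qed.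
Lemma qind S : exists x, S = qcls F x. Proof. exists (rep S). apply rep_spec. Qed.

Definition lift2 (f : L -> L -> L) (S T : quot F) : quot F := qcls F (f (rep S) (rep T)).
Lemma lift2_spec f : (forall x x' y y', rho F x x' -> rho F y y' -> rho F (f x y) (f x' y')) ->
  forall x y, lift2 f (qcls F x) (qcls F y) = qcls F (f x y).
Proof. intros H x y. apply qcls_eq. apply H; apply qcls_inv; symmetry; apply rep_spec. Qed.

Lemma qle a b : qcls F (mt a b) = qcls F a <-> F (im a b).
Proof. rewrite <- le_char. split. apply qcls_inv. apply qcls_eq. Qed.

Lemma main :
  exists (qjoin qmeet qimp qmul : quot F -> quot F -> quot F),
    (forall x y : L, qjoin (qcls F x) (qcls F y) = qcls F (il_join L x y)) /\
    (forall x y : L, qmeet (qcls F x) (qcls F y) = qcls F (il_meet L x y)) /\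
    (forall x y : L, qmul (qcls F x) (qcls F y) = qcls F (il_mul L x y)) /\
    (forall x y : L, qimp (qcls F x) (qcls F y) = qcls F (il_imp L x y)) /\
    is_residuated_lattice qjoin qmeet (qcls F (il_bot L)) qimp qmul
      (qcls F (il_one L)).
Proof.
assert (hj : forall x y, lift2 jn (qcls F x) (qcls F y) = qcls F (jn x y)).
{ apply lift2_spec. intros x x' y y' [a b] [c d]. split; apply Fjoinc; auto. }
assert (hm : forall x y, lift2 mt (qcls F x) (qcls F y) = qcls F (mt x y)).
{ apply lift2_spec. intros x x' y y' [a b] [c d]. split; apply Fmeetc; auto. }
assert (hp : forall x y, lift2 ml (qcls F x) (qcls F y) = qcls F (ml x y)).
{ apply lift2_spec. intros x x' y y' [a b] [c d]. split; apply Fmulc; auto. }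
assert (hi : forall x y, lift2 im (qcls F x) (qcls F y) = qcls F (im x y)).
{ apply lift2_spec. intros x x' y y' [a b] [c d]. split; apply Fimpc; auto. }
exists (lift2 jn), (lift2 mt), (lift2 im), (lift2 ml).
split; [exact hj|]. split; [exact hm|]. split; [exact hp|]. split; [exact hi|].
unfold is_residuated_lattice, is_lattice, is_comm_monoid, residuation, lat_le.
repeat split; intros;
repeat match goal with S : quot F |- _ => destruct (qind S) as [? ->]; clear S end;
try (rewrite ?hj, ?hm, ?hp, ?hi, ?hj, ?hm, ?hp, ?hi; f_equal;
  first [apply jC | apply mC | apply jA | apply mA | apply jabs | apply mabs | apply botl
        | apply pA | apply pC | apply p1]).
- rewrite hm. apply qle. apply (Fup HA). apply imp_anti_l, top_ge.
- rewrite ?hp, ?hi, ?hm in *; rewrite ?hp, ?hi, ?hm. apply qle. apply qle in H. rewrite <- curry. exact H.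
- rewrite ?hp, ?hi, ?hm in *; rewrite ?hp, ?hi, ?hm. apply qle. apply qle in H. rewrite curry. exact H.
Qed.
End Q.
Unset Implicit Arguments.

Theorem mainTheorem12 (L : ILAlgebra) (F : L -> Prop) :
  is_filter F -> affine F ->
  exists (qjoin qmeet qimp qmul : quot F -> quot F -> quot F),
    (forall x y : L, qjoin (qcls F x) (qcls F y) = qcls F (il_join L x y)) /\
    (forall x y : L, qmeet (qcls F x) (qcls F y) = qcls F (il_meet L x y)) /\
    (forall x y : L, qmul (qcls F x) (qcls F y) = qcls F (il_mul L x y)) /\
    (forall x y : L, qimp (qcls F x) (qcls F y) = qcls F (il_imp L x y)) /\
    is_residuated_lattice qjoin qmeet (qcls F (il_bot L)) qimp qmul
      (qcls F (il_one L)).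
Proof. intros HF HA. exact (main HF HA). Qed.
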